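(* Let $X$ be a positive random variable with finite mean $\mu$, which is either discrete with probability mass function $f_X$ or absolutely continuous with density $f_X$. Suppose there exist positive constants $c$ and $t_0$ such that $$\frac{x}{\mu}f_X(x)\le f_X(x-c)\qquad\text{for all } x\ge t_0.$$ Then, if $X^s$ has the size bias distribution of $X$, $$\mathbb{P}(X^s\ge t)\le \mathbb{P}(X+c\ge t)\qquad\text{for all } t\ge t_0.$$
   Context: Size bias transform: for a positive random variable $X$ with finite mean $\mu$, $X^s$ has the size bias distribution of $X$ if $\mathbb{E}[Xf(X)]=\mu\mathbb{E}[f(X^s)]$ for all $f$ with $\mathbb{E}[Xf(X)]<\infty$; when $X$ has density or mass function $f_X$, $X^s$ has density or mass function $x f_X(x)/\mu$. *)

(* Defs.v *)
From mathcomp Require Import all_boot all_order all_algebra.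
From mathcomp Require Import all_classical all_reals all_analysis.
Set Implicit Arguments. Unset Strict Implicit. Unset Printing Implicit Defensive.
Import Order.TTheory GRing.Theory Num.Theory.
Local Open Scope classical_set_scope.
Local Open Scope ring_scope.

Definition meanRV d (T : measurableType d) (R : realType)
  (P : probability T R) (X : T -> R) : R :=
  fine (\int[P]_w (X w)%:E)%E.

Definition size_bias d d' (T : measurableType d) (T' : measurableType d')
  (R : realType) (P : probability T R) (X : T -> R)
  (Q : probability T' R) (Xs : T' -> R) : Prop :=
  forall f : R -> R, measurable_fun setT f ->
    P.-integrable setT (fun w => (X w * f (X w))%:E) ->
    (\int[P]_w (X w * f (X w))%:E
       = (meanRV P X)%:E * \int[Q]_w (f (Xs w))%:E)%E.

Definition has_density d (T : measurableType d) (R : realType)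
  (P : probability T R) (X : T -> R) (fX : R -> R) : Prop :=
  (forall x, 0 <= fX x) /\ measurable_fun setT fX /\
  forall A : set R, measurable A ->
    P (X @^-1` A) = (\int[lebesgue_measure]_(x in A) (fX x)%:E)%E.

Definition is_discrete d (T : measurableType d) (R : realType)
  (P : probability T R) (X : T -> R) : Prop :=
  exists S : set R, countable S /\ P (X @^-1` S) = 1%E.

Definition pmass d (T : measurableType d) (R : realType)
  (P : probability T R) (X : T -> R) (x : R) : R :=
  fine (P (X @^-1` [set x])).

(* Main.v *)
Require Import Defs.
From HB Require Import structures.
From mathcomp Require Import all_boot all_order all_algebra.
From mathcomp Require Import all_classical all_reals all_analysis.
From mathcomp Require Import measurable_realfun.
Import Order.TTheory GRing.Theory Num.Theory.
Local Open Scope classical_set_scope.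
Local Open Scope ring_scope.
Set Implicit Arguments. Unset Strict Implicit.

Section shift.
Context (R : realType) (c : R).
Local Notation mu := (@lebesgue_measure R).

Definition phi (x : measurableTypeR R) : measurableTypeR R := x - c.
Lemma mphi : measurable_fun setT phi.
Proof. by apply: measurable_funD => //; exact: measurable_cst. Qed.
HB.instance Definition _ := isMeasurableFun.Build _ _ _ _ phi mphi.

Lemma pre_shift_itv (a b : R) : phi @^-1` `]a, b]%classic = `]a + c, b + c]%classic.
Proof.
by apply/seteqP; split => x /=; rewrite /phi !in_itv /= ltrBrDr lerBlDr.
Qed.

Lemma leb_shift (B : set R) : measurable B ->
  pushforward mu phi B = mu B.
Proof.
move=> mB.
apply/esym; apply: (@lebesgue_measure_unique R (pushforward mu phi)) mB => _ [[a b]] _ <-.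
transitivity (mu (phi @^-1` `]a, b]%classic)); last by []. rewrite pre_shift_itv !lebesgue_measure_itv /=.
by rewrite !lte_fin ltrD2r -!EFinD opprD addrACA subrr addr0.
Qed.

Lemma integral_shift (f : R -> R) (t : R) : measurable_fun setT f -> (forall x, 0 <= f x) ->
  (\int[mu]_(x in `[t, +oo[) (f (x - c))%:E = \int[mu]_(y in `[(t - c)%R, +oo[) (f y)%:E)%E.
Proof.
move=> mf f0.
have -> : `[t, +oo[%classic = phi @^-1` `[t - c, +oo[.
  by apply/seteqP; split => x /=; rewrite /phi !in_itv /= !andbT lerD2r.
transitivity (\int[pushforward mu phi]_(y in `[(t - c)%R, +oo[) (f y)%:E)%E.
  rewrite ge0_integral_pushforward //.
  - apply/measurable_EFinP; exact: measurable_funTS.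
  - by move=> y _; rewrite lee_fin.
apply: eq_measure_integral => B mB _.
exact: leb_shift.
Qed.
End shift.

Section dens.
Context (R : realType) (d : measure_display) (T : measurableType d) (P : probability T R)
  (X : T -> R).
Hypotheses (mX : measurable_fun setT X) (X0 : forall w, 0 < X w)
  (iX : P.-integrable setT (fun w => (X w)%:E)).
Local Notation leb := (@lebesgue_measure R).

Lemma density_change (fX : R -> R) (t : R) : 0 < t -> has_density P X fX ->
  (\int[P]_(w in X @^-1` `[t, +oo[) (X w)%:E =
   \int[leb]_(x in `[t, +oo[) (x * fX x)%:E)%E.
Proof.
move=> t0 [fX0 [mfX hd]].
set A : set R := `[t, +oo[%classic.
have mA : measurable A by exact: measurable_itv.
pose Xm : {mfun T >-> measurableTypeR R} := HB.pack (X : T -> measurableTypeR R) (isMeasurableFun.Build _ _ _ (measurableTypeR R) X mX).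
pose nu := distribution P Xm.
have numu : nu `<< leb.
  apply/null_content_dominatesP => B mB lB0.
  rewrite /nu /distribution /pushforward /= hd //.
  by apply: null_set_integral => //; apply/measurable_EFinP; exact: measurable_funTS.
have -> : (\int[P]_(w in X @^-1` A) (X w)%:E = \int[nu]_(x in A) x%:E)%E.
  rewrite /nu /distribution ge0_integral_pushforward //.
  by move=> x; rewrite inE /A /= in_itv /= andbT => /(lt_le_trans t0) /ltW; rewrite lee_fin.
have inu : nu.-integrable A (fun x => x%:E).
  apply: integrable_pushforward => //.
    by apply/measurable_EFinP; exact: measurable_id.
  have mXA : measurable (X @^-1` A) by rewrite -[X in measurable X]setTI; exact: mX.
  apply: (integrableS measurableT mXA) => //.
rewrite -(@Radon_Nikodym_change_of_variables _ _ R nu leb numu _ _ mA inu).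
apply: ae_eq_integral => //.
- apply: emeasurable_funM.
    by apply: measurable_funTS; apply/measurable_EFinP; exact: measurable_id.
  apply: measurable_funTS; apply: measurable_int.
  exact: Radon_Nikodym_integrable.
- apply/measurable_EFinP; apply: measurable_funM => //.
  exact: measurable_funTS.
- under [X in ae_eq _ _ _ X]eq_fun do rewrite EFinM.
  apply: ae_eqe_mul2l.
  apply: integral_ae_eq => //.
  + apply: (integrableS measurableT) => //.
    exact: Radon_Nikodym_integrable.
  + apply/measurable_EFinP; exact: measurable_funTS.
  + move=> E EA mE.
    by rewrite -Radon_Nikodym_integral // -hd.
Qed.
End dens.

Section aux.
Context (R : realType) (d : measure_display) (T : measurableType d) (P : probability T R)
  (X : T -> R).
Hypotheses (mX : measurable_fun setT X) (X0 : forall w, 0 < X w)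
  (iX : P.-integrable setT (fun w => (X w)%:E)).

Lemma meanE : (\int[P]_w (X w)%:E)%E = (meanRV P X)%:E.
Proof. by rewrite /meanRV fineK // integrable_fin_num. Qed.

Lemma sb_Q d' (T' : measurableType d') (Q : probability T' R) (Xs : T' -> R)
  (mXs : measurable_fun setT Xs) (t : R) :
  size_bias P X Q Xs ->
  (\int[P]_(w in X @^-1` `[t, +oo[) (X w)%:E =
    (meanRV P X)%:E * Q [set w | (t <= Xs w)%R])%E.
Proof.
move=> sb.
set A : set R := `[t, +oo[%classic.
have mA : measurable A by exact: measurable_itv.
have mXA : measurable (X @^-1` A) by rewrite -[X in measurable X]setTI; exact: mX.
have mXsA : measurable (Xs @^-1` A) by rewrite -[X in measurable X]setTI; exact: mXs.
have mf : measurable_fun setT (\1_A : R -> R) by exact: measurable_realfun.measurable_indic.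
have iXf : P.-integrable setT (fun w => (X w * \1_A (X w))%:E).
  apply: le_integrable iX => //.
    apply/measurable_EFinP; apply: measurable_funM => //.
    exact: measurableT_comp.
  move=> w _ /=; rewrite lee_fin normrM indicE.
  case: (X w \in A); rewrite ?normr1 ?normr0 ?mulr1 ?mulr0 //.
transitivity (\int[P]_w (X w * \1_A (X w))%:E)%E.
  rewrite integral_mkcond; apply: eq_integral => w _.
  rewrite patchE indicE /=.
  have -> : (w \in X @^-1` A) = (X w \in A) by apply/idP/idP => /set_mem H; apply/mem_set.
  by case: (X w \in A); rewrite ?mulr1 ?mulr0.
rewrite (sb _ mf iXf); congr (_ * _)%E.
rewrite (_ : [set w | t <= Xs w] = Xs @^-1` A); last first.
  by apply/seteqP; split => w /=; rewrite /A /= in_itv /= andbT.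
by rewrite -[Xs @^-1` A]setIT -integral_indic.
Qed.
Lemma mean_gt0 : 0 < meanRV P X.
Proof.
have mXe := measurable_int _ iX.
have ge0 : (0 <= \int[P]_w (X w)%:E)%E.
  by apply: integral_ge0 => w _; rewrite lee_fin ltW.
rewrite lt_neqAle -lee_fin -meanE ge0 andbT.
apply/negP => /eqP H.
have H' : (\int[P]_w (X w)%:E = 0)%E by rewrite meanE -H.
have : (\int[P]_w `|(X w)%:E| = 0)%E.
  rewrite -H'; apply: eq_integral => w _ /=.
  by rewrite gtr0_norm.
move/(ae_eq_integral_abs _ measurableT mXe) => [N [mN PN0 sub]].
have : P setT = 0%E.
  apply/eqP; rewrite eq_le measure_ge0 andbT -PN0 le_measure ?inE //.
  move=> w _; apply: sub => /(_ I) /= /eqP.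
  by rewrite eqe gt_eqF.
by rewrite probability_setT => /eqP; rewrite onee_eq0.
Qed.

Lemma key_disc {c t0 : R} : 0 < c -> 0 < t0 ->
  is_discrete P X ->
  (forall x, t0 <= x -> x / meanRV P X * pmass P X x <= pmass P X (x - c)) ->
  forall t, t0 <= t ->
  (\int[P]_(w in X @^-1` `[t, +oo[) (X w)%:E <=
    (meanRV P X)%:E * P [set w | (t <= X w + c)%R])%E.
Proof.
move=> c0 t00 [S [cS PS1]] H t tt0.
have mu0 : 0 < meanRV P X by apply: mean_gt0.
have t0' : 0 < t by apply: lt_le_trans tt0.
have [g ginj] := countable_injP _ cS.
pose Sn n : set R := S `&` [set x | g x = n].
have Snsub n x y : Sn n x -> Sn n y -> x = y.
  move=> [Sx gx] [Sy gy]; apply: ginj; rewrite ?inE //.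
  by rewrite gx gy.
have Sn01 n : Sn n = set0 \/ exists x, Sn n = [set x].
  have [[x Bx]|nB] := pselect (exists x, Sn n x).
  - right; exists x; apply/seteqP; split => y /=.
      by move=> By; exact: Snsub By Bx.
    by move=> ->.
  - left; apply/seteqP; split => y // By; apply: nB; by exists y.
have mSn n : measurable (Sn n).
  by case: (Sn01 n) => [->|[x ->]]; [exact: measurable0 | exact: measurable_set1].
have mS : measurable S.
  rewrite (_ : S = \bigcup_n Sn n); first exact: bigcupT_measurable.
  apply/seteqP; split => x.
    by move=> Sx; exists (g x) => //.
  by move=> [n _ []].
set A : set R := `[t, +oo[%classic.
have mA : measurable A by exact: measurable_itv.
pose B n := A `&` Sn n.
have mB n : measurable (B n) by apply: measurableI.
have tB : trivIset setT B.
  apply/trivIsetP => i j _ _ ij; apply/seteqP; split => // x [[_ [_ gi]] [_ [_ gj]]].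
  by move: ij; rewrite -gi -gj eqxx.
have mXc : measurable_fun setT (fun w => X w + c).
  by apply: measurable_funD => //; exact: measurable_cst.
pose C n := (fun w => X w + c) @^-1` B n.
have mC n : measurable (C n) by rewrite /C -[X in measurable X]setTI; exact: mXc.
have mXe := measurable_int _ iX.
have mpre (E : set R) : measurable E -> measurable (X @^-1` E).
  by move=> mE; rewrite -[X in measurable X]setTI; exact: mX.
have -> : X @^-1` A = X @^-1` (A `&` S) `|` X @^-1` (A `&` ~` S).
  apply/seteqP; split => w /=.
    by move=> Aw; have [Sw|nSw] := pselect (S (X w)); [left|right].
  by move=> [[]|[]].
rewrite ge0_integral_setU //; last 3 first.
  - exact: measurable_funTS.
  - by move=> w _; rewrite lee_fin ltW.
  - by apply/disj_setPS => w [[_ Sw] [_ nSw]].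
rewrite [X in (_ + X)%E]null_set_integral; last 3 first.
  - by apply: mpre; apply: measurableI => //; exact: measurableC.
  - exact: measurable_funTS.
  - apply/eqP; rewrite eq_le measure_ge0 andbT.
    rewrite (@le_trans _ _ (P (X @^-1` (~` S)))) //.
      by apply: le_measure; rewrite ?inE //; [apply: mpre; apply: measurableI => //; exact: measurableC | apply: mpre; exact: measurableC | move=> w [] ].
    by rewrite -preimage_setC probability_setC ?PS1 ?subee //; exact: mpre.
rewrite adde0.
have -> : X @^-1` (A `&` S) = \bigcup_n X @^-1` B n.
  rewrite -preimage_bigcup; congr (X @^-1` _).
  apply/seteqP; split => x.
    by move=> [Ax Sx]; exists (g x) => //.
  by move=> [n _ [Ax [Sx _]]].
rewrite ge0_integral_bigcup //; last 3 first.
  - exact: measurable_funTS.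
  - by move=> w _; rewrite lee_fin ltW.
  - apply/trivIsetP => i j _ _ ij.
    have tB2 := proj1 trivIsetP tB.
    by rewrite -preimage_setI tB2 // preimage_set0.
have pmE y : P (X @^-1` [set y]) = (pmass P X y)%:E.
  by rewrite /pmass fineK // fin_num_measure //; apply: mpre; exact: measurable_set1.
have bnd n : (\int[P]_(w in X @^-1` B n) (X w)%:E <= (meanRV P X)%:E * P (C n))%E.
  have [Bn0|[x [Bnx tx]]] : B n = set0 \/ exists x, B n = [set x] /\ t <= x.
    case: (Sn01 n) => [Sn0|[x Snx]].
      by left; rewrite /B Sn0 setI0.
    have [Ax|nAx] := pselect (A x).
      right; exists x; split.
        by rewrite /B Snx; apply/seteqP; split => y /=; [move=> [] | move=> ->].
      by move: Ax; rewrite /A /= in_itv /= andbT.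
    left; rewrite /B Snx; apply/seteqP; split => y // [Ay /= yx].
    by apply: nAx; rewrite -yx.
    rewrite Bn0 preimage_set0 integral_set0.
    by rewrite mule_ge0 // lee_fin ltW.
  have -> : C n = X @^-1` [set x - c].
    rewrite /C Bnx; apply/seteqP; split => w /=.
      by move=> <-; rewrite addrK.
    by move=> ->; rewrite subrK.
  rewrite Bnx (_ : \int[P]_(w in X @^-1` [set x]) (X w)%:E =
      \int[P]_(w in X @^-1` [set x]) (cst x%:E) w)%E; last first.
    by apply: eq_integral => w; rewrite inE /= => ->.
  rewrite integral_cst; last by apply: mpre; exact: measurable_set1.
  rewrite (pmE (x - c)) [X in (_ * X)%E](_ : _ = (pmass P X x)%:E); last exact: pmE.
  rewrite -!EFinM lee_fin.
  have := H x (le_trans tt0 tx).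
  by rewrite mulrAC ler_pdivrMr // mulrC [_ * meanRV P X]mulrC.
apply: (@le_trans _ _ (\sum_(0 <= n <oo) ((meanRV P X)%:E * P (C n)))%E).
  apply: lee_nneseries => // n _ _.
  by apply: integral_ge0 => w _; rewrite lee_fin ltW.
rewrite nneseriesZl //.
apply: lee_wpmul2l; first by rewrite lee_fin ltW.
rewrite -measure_semi_bigcup //; last 2 first.
  - apply/trivIsetP => i j _ _ ij.
    have tB2 := proj1 trivIsetP tB.
    by rewrite /C -preimage_setI tB2 // preimage_set0.
  - exact: bigcupT_measurable.
apply: le_measure; rewrite ?inE //.
  exact: bigcupT_measurable.
  rewrite (_ : [set w | _] = (fun w => X w + c) @^-1` A).
    by rewrite -[X in measurable X]setTI; exact: mXc.
  by apply/seteqP; split => w /=; rewrite /A /= in_itv /= andbT.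
by move=> w [n _ [/= Aw _]]; move: Aw; rewrite /A /= in_itv /= andbT.
- by move=> k; exact: mpre.
- by apply: mpre; apply: measurableI.
- by apply: mpre; apply: measurableI => //; exact: measurableC.
Qed.

Lemma key_cont {c t0 : R} : 0 < c -> 0 < t0 ->
  (exists fX : R -> R, has_density P X fX /\
     forall x, t0 <= x -> x / meanRV P X * fX x <= fX (x - c)) ->
  forall t, t0 <= t ->
  (\int[P]_(w in X @^-1` `[t, +oo[) (X w)%:E <=
    (meanRV P X)%:E * P [set w | (t <= X w + c)%R])%E.
Proof.
move=> c0 t00 [fX [hdX H]] t tt0.
have mu0 : 0 < meanRV P X by apply: mean_gt0.
have t0' : 0 < t by apply: lt_le_trans tt0.
rewrite (density_change mX iX t0' hdX).
case: hdX => [fX0 [mfX hd]].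
have mA : measurable (`[t, +oo[%classic : set R) by exact: measurable_itv.
apply: (@le_trans _ _ (\int[lebesgue_measure]_(x in `[t, +oo[) ((meanRV P X)%:E * (fX (x - c))%:E))%E).
  apply: ge0_le_integral => //.
  - move=> x; rewrite /= in_itv /= andbT => hx.
    by rewrite lee_fin mulr_ge0 // ltW // (lt_le_trans t0').
  - apply/measurable_EFinP; apply: measurable_funM => //; exact: measurable_funTS.
  - apply: emeasurable_funM => //; apply/measurable_EFinP.
    apply: measurable_funTS; apply: measurableT_comp => //.
    by apply: measurable_funD => //; exact: measurable_cst.
  - move=> x; rewrite /= in_itv /= andbT => hx.
    rewrite -EFinM lee_fin.
    have := H x (le_trans tt0 hx).
    by rewrite mulrAC ler_pdivrMr // mulrC [_ * meanRV P X]mulrC.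
rewrite ge0_integralZl //; last 3 first.
  - apply/measurable_EFinP; apply: measurable_funTS; apply: measurableT_comp => //.
    by apply: measurable_funD => //; exact: measurable_cst.
  - by move=> x _; rewrite lee_fin.
  - by rewrite lee_fin ltW.
rewrite integral_shift //.
rewrite -hd; last exact: measurable_itv.
rewrite (_ : X @^-1` _ = [set w | (t <= X w + c)%R]) //.
by apply/seteqP; split => w /=; rewrite in_itv /= andbT lerBlDr.
Qed.

End aux.

Unset Implicit Arguments.

Theorem theorem3p1 (R : realType)
  (d : measure_display) (T : measurableType d) (P : probability T R)
  (d' : measure_display) (T' : measurableType d') (Q : probability T' R)
  (X : T -> R) (Xs : T' -> R) (c t0 : R) :
  measurable_fun setT X -> measurable_fun setT Xs ->
  (forall w, 0 < X w) ->
  P.-integrable setT (fun w => (X w)%:E) ->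
  0 < c -> 0 < t0 ->
  ((is_discrete P X /\
     forall x, t0 <= x -> x / meanRV P X * pmass P X x <= pmass P X (x - c))
   \/
   (exists fX : R -> R, has_density P X fX /\
     forall x, t0 <= x -> x / meanRV P X * fX x <= fX (x - c))) ->
  size_bias P X Q Xs ->
  forall t, t0 <= t ->
    (Q [set w | (t <= Xs w)%R] <= P [set w | (t <= X w + c)%R])%E.
Proof.
move=> mX mXs X0 iX c0 t00 H sb t tt0.
have mu0 : 0 < meanRV P X by apply: mean_gt0.
rewrite -(@lee_pmul2l _ (meanRV P X)%:E) ?lte_fin //.
rewrite -sb_Q //.
case: H => [[H1 H2]|H].
  exact: (key_disc mX X0 iX c0 t00 H1 H2 tt0).
exact: (key_cont mX X0 iX c0 t00 H tt0).
Qed.
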